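(* Let $\lambda$ be a nonzero real number. For every integer $n\ge0$ and every real $x$ with $1+\lambda x>0$, \[ \mathrm{Bel}_{n,\lambda}(x)=\sum_{k=0}^{n}(1)_{k,\lambda}\Big(\frac{x}{1+\lambda x}\Big)^{k}S_{2}(n,k). \] In particular, if $1+\lambda>0$, then $\mathrm{Bel}_{n,\lambda}:=\mathrm{Bel}_{n,\lambda}(1)=\sum_{k=0}^{n}(1)_{k,\lambda}\big(\frac{1}{1+\lambda}\big)^{k}S_{2}(n,k)$.
   Context: $(1)_{0,\lambda}=1$, $(1)_{k,\lambda}=1(1-\lambda)\cdots(1-(k-1)\lambda)$ for $k\ge1$. $S_2(n,k)$ are the Stirling numbers of the second kind, defined by $x^n=\sum_{k=0}^nS_2(n,k)(x)_k$ with $(x)_k=x(x-1)\cdots(x-k+1)$. $e_\lambda(x)=(1+\lambda x)^{1/\lambda}$, $e_\lambda^{-1}(x)=(1+\lambda x)^{-1/\lambda}$. The new type degenerate Bell polynomials $\mathrm{Bel}_{n,\lambda}(x)$ are defined by $e_{\lambda}(xe^{t})\,e_{\lambda}^{-1}(x)=\big(\frac{1+\lambda xe^t}{1+\lambda x}\big)^{1/\lambda}=\sum_{n=0}^{\infty}\mathrm{Bel}_{n,\lambda}(x)\frac{t^{n}}{n!}$. *)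

(* Defs.v *)
From Stdlib Require Import Reals Lra Lia.
From Coquelicot Require Import Coquelicot.
Open Scope R_scope.

Fixpoint falling (x : R) (k : nat) : R :=
  match k with
  | O => 1
  | S k' => falling x k' * (x - INR k')
  end.

Fixpoint deg_falling_one (lam : R) (k : nat) : R :=
  match k with
  | O => 1
  | S k' => deg_falling_one lam k' * (1 - INR k' * lam)
  end.

Fixpoint stirling2 (n k : nat) : R :=
  match n, k with
  | O, O => 1
  | O, S _ => 0
  | S _, O => 0
  | S n', S k' => INR (S k') * stirling2 n' (S k') + stirling2 n' k'
  end.

Lemma stirling2_gt (n k : nat) : (n < k)%nat -> stirling2 n k = 0.
Proof.
  revert k; induction n as [|n IH]; intros [|k] H; simpl; try lia; try reflexivity.
  rewrite !IH by lia. ring.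
Qed.

Lemma falling_S (x : R) (k : nat) : falling x (S k) = falling x k * (x - INR k).
Proof. reflexivity. Qed.

(* Sanity check: these are the numbers defined in the paper by
   x^n = sum_{k=0}^n S_2(n,k) (x)_k. *)
Lemma stirling2_defining (n : nat) (x : R) :
  x ^ n = sum_f_R0 (fun k => stirling2 n k * falling x k) n.
Proof.
  induction n as [|n IH].
  - simpl. ring.
  - (* x^(n+1) = x * sum = sum S(n,k) ((x)_{k+1} + k (x)_k) *)
    assert (E : forall m, (m <= n)%nat ->
      sum_f_R0 (fun k => stirling2 (S n) k * falling x k) m
      = x * sum_f_R0 (fun k => stirling2 n k * falling x k) m
        - stirling2 n m * falling x (S m)).
    { induction m as [|m IHm]; intros Hm.
      - simpl. ring.
      - rewrite !tech5. rewrite IHm by lia.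
        replace (stirling2 (S n) (S m)) with
          (INR (S m) * stirling2 n (S m) + stirling2 n m) by reflexivity.
        rewrite !falling_S, S_INR. ring. }
    rewrite tech5. rewrite E by lia.
    rewrite <- IH. simpl pow.
    replace (stirling2 (S n) (S n)) with
      (INR (S n) * stirling2 n (S n) + stirling2 n n) by reflexivity.
    rewrite (stirling2_gt n (S n)) by lia.
    ring.
Qed.

(* New type degenerate Bell polynomials, defined through their generating
   function  ((1 + lam x e^t)/(1 + lam x))^(1/lam) = sum_n Bel_{n,lam}(x) t^n/n!:
   Bel_{n,lam}(x) is the n-th Taylor coefficient times n!, i.e. the n-th
   derivative in t at t = 0 of the generating function. *)
Definition bell_gf (lam x : R) (t : R) : R :=
  Rpower ((1 + lam * x * exp t) / (1 + lam * x)) (1 / lam).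

Definition deg_bell (n : nat) (lam x : R) : R :=
  Derive_n (bell_gf lam x) n 0.

(* Main.v *)
Require Import Defs.
From Stdlib Require Import Reals Lra Lia.
From Coquelicot Require Import Coquelicot.
Open Scope R_scope.

Section S.
Variables (lam x : R).
Hypothesis Hlam : lam <> 0.
Hypothesis Hx : 0 < 1 + lam * x.

Definition w (s : R) := (1 + lam * x * exp s) / (1 + lam * x).
Definition y := x / (1 + lam * x).
Definition h (k : nat) (s : R) :=
  deg_falling_one lam k * y ^ k * Rpower (w s) (1 / lam - INR k) * exp (INR k * s).

Lemma h_derive k s : 0 < w s -> is_derive (h k) s (h (S k) s + INR k * h k s).
Proof.
  intros Hw. unfold h, Rpower.
  assert (Hw' : w s <> 0) by lra.
  unfold w in *. set (W := (1 + lam * x * exp s) / (1 + lam * x)) in *.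
  auto_derive.
  - exact Hw.
  - change ((1 + lam * x * exp s) * / (1 + lam * x)) with W.
    simpl deg_falling_one. rewrite S_INR.
    replace ((1 / lam - (INR k + 1)) * ln W) with 
      ((1 / lam - INR k) * ln W + - ln W) by ring.
    replace ((INR k + 1) * s) with (INR k * s + s) by ring.
    rewrite !exp_plus, exp_Ropp, exp_ln by lra.
    unfold y. clearbody W. simpl pow. field. split; [lra|split; auto; lra].
Qed.

Lemma sum_derive (c : nat -> R) m s : 0 < w s ->
  is_derive (fun t => sum_f_R0 (fun k => c k * h k t) m) s
    (sum_f_R0 (fun k => c k * (h (S k) s + INR k * h k s)) m).
Proof.
  intros Hw. induction m as [|m IH]; simpl.
  - apply is_derive_scal. apply h_derive; auto.
  - apply (is_derive_plus (fun t => sum_f_R0 (fun k => c k * h k t) m)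
                          (fun t => c (S m) * h (S m) t)); auto.
    apply is_derive_scal. apply h_derive; auto.
Qed.

Lemma stir_id (g : nat -> R) n m :
  sum_f_R0 (fun k => stirling2 (S n) k * g k) m =
  sum_f_R0 (fun k => stirling2 n k * (g (S k) + INR k * g k)) m - stirling2 n m * g (S m).
Proof.
  induction m as [|m IH].
  - simpl. ring.
  - rewrite !tech5, IH. change (stirling2 (S n) (S m)) with (INR (S m) * stirling2 n (S m) + stirling2 n m).
    rewrite S_INR. ring.
Qed.

Lemma w_loc s : 0 < w s -> locally s (fun t => 0 < w t).
Proof.
  intros Hw.
  assert (C : continuous w s).
  { apply (@ex_derive_continuous R_AbsRing R_NormedModule). unfold w. auto_derive. auto. }
  apply (C (fun z => 0 < z)). apply (open_gt 0). exact Hw.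
Qed.

Lemma main_ind n : forall s, 0 < w s ->
  Derive_n (bell_gf lam x) n s = sum_f_R0 (fun k => stirling2 n k * h k s) n.
Proof.
  induction n as [|n IH]; intros s Hs.
  - simpl. unfold h, bell_gf, w. simpl. rewrite Rmult_0_l, exp_0, Rminus_0_r. ring.
  - simpl Derive_n.
    rewrite (Derive_ext_loc _ (fun t => sum_f_R0 (fun k => stirling2 n k * h k t) n)).
    + rewrite (is_derive_unique _ _ _ (sum_derive _ n s Hs)).
      rewrite (stir_id (fun k => h k s) n (S n)).
      rewrite (stirling2_gt n (S n)) by lia.
      rewrite tech5, (stirling2_gt n (S n)) by lia. ring.
    + generalize (w_loc s Hs). apply filter_imp. intros t Ht. apply IH; auto.
Qed.

End S.

Theorem theorem11 (lam : R) (Hlam : lam <> 0) :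
  (forall (n : nat) (x : R), 0 < 1 + lam * x ->
     deg_bell n lam x =
     sum_f_R0 (fun k => deg_falling_one lam k * (x / (1 + lam * x)) ^ k
                         * stirling2 n k) n)
  /\
  (0 < 1 + lam ->
   forall n : nat,
     deg_bell n lam 1 =
     sum_f_R0 (fun k => deg_falling_one lam k * (1 / (1 + lam)) ^ k
                         * stirling2 n k) n).
Proof.
  assert (P1 : forall (n : nat) (x : R), 0 < 1 + lam * x ->
     deg_bell n lam x =
     sum_f_R0 (fun k => deg_falling_one lam k * (x / (1 + lam * x)) ^ k
                         * stirling2 n k) n).
  { intros n x Hx. unfold deg_bell.
    assert (H0 : 0 < w lam x 0).
    { unfold w. rewrite exp_0, Rmult_1_r. apply Rdiv_lt_0_compat; lra. }
    rewrite (main_ind lam x Hlam Hx n 0 H0).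
    apply sum_eq. intros k _. unfold h, y.
    replace (w lam x 0) with 1.
    - unfold Rpower. rewrite ln_1, !Rmult_0_r, exp_0. ring.
    - unfold w. rewrite exp_0, Rmult_1_r. field. lra. }
  split; auto.
  intros H n. rewrite P1 by lra. rewrite Rmult_1_r. reflexivity.
Qed.
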